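(* Let $a,d\in\mathbb N$ and let $\chi\in M(d)_\mathbb R$ be strictly dominant with $\chi\in\mathbf V^a(1,d)$. Then there exists a unique integer $0\le e\le d$ such that \[ \chi=\sum_{j<i\le e}c_{ij}(\beta_i-\beta_j)+\sum_{e<j<i}c_{ij}(\beta_i-\beta_j)+\sum_{j\le e<i}\tfrac32(\beta_i-\beta_j)+\sum_{1\le i\le d}c_i\beta_i \] for some real numbers with $0\le c_{ij}\le\frac32$ for $j<i$, $-\frac{a+2}{2}\le c_i\le-\frac a2$ for $i\le e$, and $-\frac a2<c_i\le\frac a2$ for $i>e$. Equivalently, with $f:=d-e$, \[ \chi\in\Big(-\tfrac{a+3f}{2}\sigma_e+\mathbf V(e)\Big)+\Big(\tfrac{3e}{2}\sigma_f+\mathbf W^a(1,f)\Big), \] where $M(e)\oplus M(f)$ is identified with $M(d)$ via the first $e$ and the last $f$ coordinates.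
   Context: $M(n)$ is the character lattice of the diagonal torus of $GL(n)$ with coordinate characters $\beta_1,\dots,\beta_n$; $\chi=\sum b_i\beta_i$ is strictly dominant if $b_1<\dots<b_n$. $\sigma_n=\sum_i\beta_i$. Minkowski sums below run over all $1\le i,j\le n$ and $1\le k\le n$: $\mathbf V(n):=\frac32\mathrm{sum}[0,\beta_i-\beta_j]+\mathrm{sum}[-\beta_k,0]$; $\mathbf W^a(1,n):=\frac32\mathrm{sum}[0,\beta_i-\beta_j]+\frac a2\mathrm{sum}(-\beta_k,\beta_k]$ (half-open segments); $\mathbf V^a(1,n):=\frac32\mathrm{sum}[0,\beta_i-\beta_j]+\frac a2\mathrm{sum}[-\beta_k,\beta_k]+\mathrm{sum}[-\beta_k,0]$. *)

(* Defs.v *)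
From HB Require Import structures.
From mathcomp Require Import all_boot all_order all_algebra.
Set Implicit Arguments. Unset Strict Implicit. Unset Printing Implicit Defensive.
Import Order.TTheory GRing.Theory Num.Theory.
Local Open Scope ring_scope.

(* M(d)_R is modelled as row vectors 'rV[R]_d; coordinates are 0-based:
   index i : 'I_d corresponds to beta_{i+1} of the paper. *)

Definition beta (R : realFieldType) (d : nat) (i : 'I_d) : 'rV[R]_d :=
  delta_mx 0 i.

Definition strictly_dominant (R : realFieldType) (d : nat) (chi : 'rV[R]_d) :=
  forall i j : 'I_d, (i < j)%N -> chi 0 i < chi 0 j.

(* membership in the Minkowski sum
   V^a(1,d) = 3/2 sum_{i,j} [0, beta_i - beta_j] + a/2 sum_k [-beta_k, beta_k]
              + sum_k [-beta_k, 0] *)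
Definition in_Va1 (R : realFieldType) (a d : nat) (chi : 'rV[R]_d) :=
  exists (t : 'I_d -> 'I_d -> R) (s u : 'I_d -> R),
    (forall i j, 0 <= t i j <= 1) /\
    (forall k, -1 <= s k <= 1) /\
    (forall k, 0 <= u k <= 1) /\
    chi = \sum_(i < d) \sum_(j < d) ((3 / 2) * t i j) *: (beta R i - beta R j)
          + \sum_(k < d) ((a%:R / 2) * s k) *: beta R k
          + \sum_(k < d) (u k) *: (- beta R k).

(* the decomposition of chi attached to the integer e (0 <= e <= d);
   paper's 1-based conditions translated to 0-based indices:
   j<i<=e  <->  j < i < e ;  e<j<i  <->  e <= j < i ;  j<=e<i <-> j < e <= i ;
   i <= e  <->  i < e ;  i > e  <->  e <= i. *)
Definition decomp (R : realFieldType) (a d : nat) (chi : 'rV[R]_d) (e : nat) :=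
  exists (c : 'I_d -> 'I_d -> R) (c1 : 'I_d -> R),
    (forall i j : 'I_d, (j < i)%N -> 0 <= c i j <= 3 / 2) /\
    (forall i : 'I_d, (i < e)%N -> - ((a%:R + 2) / 2) <= c1 i <= - (a%:R / 2)) /\
    (forall i : 'I_d, (e <= i)%N -> - (a%:R / 2) < c1 i <= a%:R / 2) /\
    chi = \sum_(i < d | (i < e)%N) \sum_(j < d | (j < i)%N)
              c i j *: (beta R i - beta R j)
          + \sum_(i < d | (e <= i)%N) \sum_(j < d | (e <= j)%N && (j < i)%N)
              c i j *: (beta R i - beta R j)
          + \sum_(i < d | (e <= i)%N) \sum_(j < d | (j < e)%N)
              (3 / 2) *: (beta R i - beta R j)
          + \sum_(i < d) c1 i *: beta R i.

(* Main.v *)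
Require Import Defs.
From HB Require Import structures.
From mathcomp Require Import all_boot all_order all_algebra.
From mathcomp Require Import lra ring zify.
Set Implicit Arguments. Unset Strict Implicit. Unset Printing Implicit Defensive.
Import Order.TTheory GRing.Theory Num.Theory.
Local Open Scope ring_scope.

Section PL.
Variable R : realFieldType.

Lemma count_lt_strict (B : seq R) (P Q : pred R) b :
  (forall c, P c -> Q c) -> b \in B -> Q b -> ~~ P b -> (count P B < count Q B)%N.
Proof.
move=> PQ; elim: B => //= c B IH; rewrite in_cons => /orP [/eqP <- | hb] Qb nPb.
  rewrite (negbTE nPb) Qb /= add0n add1n ltnS; exact: sub_count.
have := IH hb Qb nPb; case: (P c) (Q c) (PQ c) => [] [] //= h; try lia; by move: (h isT).

Qed.

Lemma aff_solve (f : R -> R) u v s :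
  (u < v -> forall w, u <= w -> w <= v -> f w = f u + (w - u) / (v - u) * (f v - f u)) ->
  u <= v -> f u <= s -> s <= f v -> exists w, f w = s.
Proof.
move=> Haff huv hs1 hs2.
case: (ltrP u v) => [ltuv|leuv]; last first.
  have evu : v = u by apply/eqP; rewrite eq_le huv leuv.
  by exists u; apply/eqP; rewrite eq_le hs1; rewrite evu in hs2.
have hf : f u <= f v by apply: le_trans hs2.
case: (ltrP (f u) (f v)) => [ltf|lef]; last first.
  by exists u; apply/eqP; rewrite eq_le hs1 (le_trans hs2 lef).
set k := (s - f u) / (f v - f u).
have dpos : 0 < f v - f u by rewrite subr_gt0.
have vpos : 0 < v - u by rewrite subr_gt0.
have k0 : 0 <= k by rewrite /k divr_ge0 // ?subr_ge0 // ltW.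
have k1 : k <= 1 by rewrite /k ler_pdivrMr // mul1r lerD2r.
have ek : k * (f v - f u) = s - f u by rewrite /k divfK // gt_eqF.
exists (u + k * (v - u)).
have w1 : u <= u + k * (v - u).
  have : 0 <= k * (v - u) by rewrite mulr_ge0 // ltW.
  lra.
have w2 : u + k * (v - u) <= v.
  have : k * (v - u) <= 1 * (v - u) by rewrite ler_wpM2r // ltW.
  lra.
rewrite (Haff ltuv _ w1 w2).
have -> : (u + k * (v - u) - u) / (v - u) = k.
  by rewrite addrC addKr mulfK // gt_eqF.
lra.
Qed.

Lemma pl_ivt (f : R -> R) (B : seq R) :
  (forall u v, u < v -> (forall b : R, b \in B -> ~~ ((u < b) && (b < v))) ->
     forall w, u <= w -> w <= v -> f w = f u + (w - u) / (v - u) * (f v - f u)) ->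
  forall u v s, u <= v -> f u <= s -> s <= f v -> exists w, f w = s.
Proof.
move=> Haff.
suff H : forall k (u v s : R), leq (count (fun b : R => (u < b) && (b < v)) B) k ->
   u <= v -> f u <= s -> s <= f v -> exists w, f w = s.
  by move=> u v s; apply: (H _ u v s (leqnn _)).
elim=> [|k IH] u v s hc huv hs1 hs2.
  apply: (aff_solve (u:=u) (v:=v)) => // ltuv; apply: Haff => // b hb.
  apply/negP => hin.
  have : (0 < count (fun b : R => ((u < b) && (b < v))%R) B)%N.
    by rewrite -has_count; apply/hasP; exists b.
  lia.
case hh : (has (fun b => (u < b) && (b < v)) B); last first.
  apply: (aff_solve (u:=u) (v:=v)) => // ltuv; apply: Haff => // b hb.
  by apply/negP => hin; move/hasP: hh; apply; exists b.
move/hasP: hh => [b hb /andP [hub hbv]].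
case: (lerP s (f b)) => hsb.
  apply: (IH u b s) => //; last exact: ltW.
  rewrite -ltnS; apply: leq_trans hc.
  apply: (count_lt_strict (b:=b)) => //; first by move=> c /andP [-> /= h]; exact: lt_trans h hbv.
  - by rewrite hub hbv.
  - by rewrite ltxx andbF.
apply: (IH b v s) => //; try exact: ltW.
rewrite -ltnS; apply: leq_trans hc.
apply: (count_lt_strict (b:=b)) => //; first by move=> c /andP [h ->]; rewrite (lt_trans hub h).
- by rewrite hub hbv.
- by rewrite ltxx.
Qed.

End PL.

Section Water.
Variable R : realFieldType.

Definition clamp (v : R) : R := if v <= 0 then 0 else if 3/2 <= v then 3/2 else v.

Lemma clamp_id v : 0 <= v -> v <= 3/2 -> clamp v = v.
Proof.
rewrite /clamp => h1 h2; case: ifP => h3; first by apply/eqP; rewrite eq_le h3 h1.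
by case: ifP => h4 //; apply/eqP; rewrite eq_le h4 h2.
Qed.

Lemma clamp_le0 v : v <= 0 -> clamp v = 0.
Proof. by rewrite /clamp => ->. Qed.

Lemma clamp_ge v : 3/2 <= v -> clamp v = 3/2.
Proof. rewrite /clamp => h; rewrite h; case: ifP => h2 //; lra. Qed.

Lemma clamp_range v : 0 <= clamp v <= 3/2.
Proof. rewrite /clamp; case: ifP => h; first lra. case: ifP => h2; lra. Qed.

Lemma clamp_aff a u v w : u < v -> ~~ ((u < a) && (a < v)) ->
  ~~ ((u < a + 3/2) && (a + 3/2 < v)) -> u <= w -> w <= v ->
  clamp (w - a) = clamp (u - a) + (w - u) / (v - u) * (clamp (v - a) - clamp (u - a)).
Proof.
move=> huv h1 h2 hw1 hw2.
case: (lerP v a) => hva.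
  by rewrite !clamp_le0 ?subrr ?mulr0 ?addr0 //; lra.
case: (lerP (a + 3/2) u) => hau.
  by rewrite !clamp_ge ?subrr ?mulr0 ?addr0 //; lra.
have hua : a <= u by move: h1; rewrite hva andbT -leNgt.
have hva2 : v <= a + 3/2 by move: h2; rewrite hau /= -leNgt.
rewrite !clamp_id; try lra.
have -> : v - a - (u - a) = v - u by ring.
rewrite mulfVK ?gt_eqF ?subr_gt0 //; ring.
Qed.

Definition wf (m : nat) (x : nat -> R) (lam : R) := \sum_(0 <= j < m) clamp (lam - x j).

Lemma wf_aff m x : forall u v, u < v ->
  (forall b : R, b \in [seq x j | j <- iota 0 m] ++ [seq x j + 3/2 | j <- iota 0 m] ->
     ~~ ((u < b) && (b < v))) ->
  forall w, u <= w -> w <= v -> wf m x w = wf m x u + (w - u) / (v - u) * (wf m x v - wf m x u).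
Proof.
move=> u v huv hB w hw1 hw2; rewrite /wf.
rewrite -sumrB mulr_sumr -big_split /=.
rewrite big_nat_cond [in RHS]big_nat_cond.
apply: eq_bigr => j /andP [/andP [_ hj] _].
apply: clamp_aff => //; apply: hB; rewrite mem_cat.
  by apply/orP; left; apply/mapP; exists j => //; rewrite mem_iota.
by apply/orP; right; apply/mapP; exists j => //; rewrite mem_iota.
Qed.

Definition mono (n : nat) (x : nat -> R) := forall i j, (i <= j)%N -> (j < n)%N -> x i <= x j.

Lemma water m x s : mono m x -> 0 <= s -> s <= 3/2 * m%:R ->
  exists lam, wf m x lam = s.
Proof.
move=> hm hs1 hs2.
case: m hm hs2 => [|m] hm hs2.
  exists 0; rewrite /wf big_geq //; lra.
apply: (pl_ivt (@wf_aff m.+1 x) (u := x 0%N) (v := x m + 3/2)).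
- have := hm 0%N m (leq0n _) (ltnSn _); lra.
- rewrite /wf big1_seq //= => j; rewrite mem_iota => /andP [_ hj].
  apply: clamp_le0; have := hm 0%N j (leq0n _) hj; lra.
- rewrite /wf (eq_big_nat _ _ (F2 := fun _ => 3/2)).
    by rewrite sumr_const_nat subn0; move: hs2; rewrite mulr_natr.
  move=> j /andP [_ hj]; apply: clamp_ge.
  have := hm j m; rewrite -ltnS => h; have := h hj (ltnSn _); lra.
Qed.

End Water.

Section HallLemma.
Variable R : realFieldType.
Implicit Types x y : nat -> R.

Definition gg (n p : nat) : R := 3/2 * p%:R * (n%:R - p%:R).
Definition HallB n x (L : R) := forall p, (p <= n)%N -> p%:R * L - gg n p <= \sum_(0 <= i < p) x i.
Definition HallT n x (U : R) := forall p, (p <= n)%N -> \sum_(p <= i < n) x i <= (n%:R - p%:R) * U + gg n p.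
Definition repr n x (L U : R) := exists (c : nat -> nat -> R) (c1 : nat -> R),
  (forall i j, (j < i)%N -> (i < n)%N -> 0 <= c i j <= 3/2) /\
  (forall i, (i < n)%N -> L <= c1 i <= U) /\
  forall k, (k < n)%N -> x k = c1 k + \sum_(0 <= j < k) c k j - \sum_(k.+1 <= i < n) c i k.

Definition pp (v : R) : R := if 0 <= v then v else 0.

Lemma pp_ge0 v : 0 <= pp v.
Proof. rewrite /pp; case: ifP => //; lra. Qed.
Lemma pp_ge v : v <= pp v.
Proof. rewrite /pp; case: ifP => // /negbT; rewrite -ltNge => h; lra. Qed.

Lemma sum_split x p n : (p <= n)%N ->
  \sum_(p <= i < n) x i = \sum_(0 <= i < n) x i - \sum_(0 <= i < p) x i.
Proof. by move=> h; rewrite (big_cat_nat (leq0n p) h) /= addrC addrK. Qed.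

Lemma sum_ge_term (F : nat -> R) n i0 : (forall i, 0 <= F i) -> (i0 < n)%N ->
  F i0 <= \sum_(0 <= i < n) F i.
Proof.
move=> h hi.
rewrite (big_cat_nat (leq0n i0) (ltnW hi)) /= (big_ltn (m:=i0)) //=.
have h1 : 0 <= \sum_(0 <= i < i0) F i by apply: sumr_ge0 => i _; exact: h.
have h2 : 0 <= \sum_(i0.+1 <= i < n) F i by apply: sumr_ge0 => i _; exact: h.
lra.
Qed.

Lemma sum_le_sub (F : nat -> R) p n : (forall i, 0 <= F i) -> (p <= n)%N ->
  \sum_(0 <= i < p) F i <= \sum_(0 <= i < n) F i.
Proof.
move=> h hp; rewrite (big_cat_nat (leq0n p) hp) /=.
have h1 : 0 <= \sum_(p <= i < n) F i by apply: sumr_ge0 => i _; exact: h.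
lra.
Qed.

Lemma prefix_cut (P : nat -> bool) m :
  (forall i j, (i <= j)%N -> (j < m)%N -> P j -> P i) ->
  exists q, (q <= m)%N /\ forall j, (j < m)%N -> P j = (j < q)%N.
Proof.
elim: m => [|m IH] hP; first by exists 0%N.
have [q [hq hq2]] : exists q, (q <= m)%N /\ forall j, (j < m)%N -> P j = (j < q)%N.
  by apply: IH => i j hij hj; apply: hP => //; apply: ltn_trans hj _.
case hPm: (P m).
  have qm : q = m.
    apply/eqP; rewrite eqn_leq hq /=; rewrite leqNgt; apply/negP => hlt.
    have := hP q m (ltnW hlt) (ltnSn _) hPm; rewrite hq2 ?ltnn //; lia.
  exists m.+1; split => // j hj.
  have [hjm|hjm] := boolP (j == m); first by rewrite (eqP hjm) hPm ltnSn.
  have hj2 : (j < m)%N by lia.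
  rewrite hq2 // qm hj2; apply/esym; lia.
exists q; split; first lia.
move=> j hj.
have [hjm|hjm] := boolP (j == m).
  rewrite (eqP hjm) hPm; apply/esym/negbTE; lia.
have hj2 : (j < m)%N by lia.
by rewrite hq2.
Qed.

Lemma interp (al be lam Yq Q P Rr : R) :
  Q <= P -> P <= Rr ->
  al + be * Q + 3/2 * Q ^+ 2 <= Yq ->
  al + be * Rr + 3/2 * Rr ^+ 2 <= Yq + (Rr - Q) * lam ->
  al + be * P + 3/2 * P ^+ 2 <= Yq + (P - Q) * lam.
Proof.
move=> h1 h2 hq hr.
case: (ltrP Q Rr) => hQR; last first.
  have eQ : P = Q by lra.
  by rewrite eQ subrr mul0r addr0.
set D := Yq + (P - Q) * lam - (al + be * P + 3/2 * P ^+ 2).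
have key : (Rr - Q) * D = (Rr - P) * (Yq - (al + be * Q + 3/2 * Q ^+ 2)) +
   (P - Q) * (Yq + (Rr - Q) * lam - (al + be * Rr + 3/2 * Rr ^+ 2)) +
   3/2 * ((Rr - P) * (P - Q) * (Rr - Q)).
  rewrite /D; ring.
have : 0 <= (Rr - Q) * D.
  rewrite key; apply: addr_ge0; first apply: addr_ge0; apply: mulr_ge0; try lra;
  apply: mulr_ge0; try lra; apply: mulr_ge0; lra.
rewrite pmulr_rge0; last lra.
rewrite /D; lra.
Qed.

End HallLemma.
Arguments gg {R} n p.

Section Top.
Variable R : realFieldType.
Implicit Types x y : nat -> R.

Lemma clamp_mono (a b l : R) : a <= b -> a + clamp (l - a) <= b + clamp (l - b).
Proof.
move=> hab; rewrite /clamp.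
case: ifP => h1; case: ifP => h2 //; try lra; case: ifP => h3 //; try lra;
 try (case: ifP => h4 //; lra).
Qed.

Lemma gg_S m p : gg m.+1 p = gg m p + 3/2 * p%:R :> R.
Proof. rewrite /gg -addn1 natrD; ring. Qed.

Lemma natS1 (m : nat) : (m.+1)%:R = m%:R + 1 :> R.
Proof. by rewrite -addn1 natrD. Qed.

Lemma natr_sub (m p : nat) : (p <= m)%N -> (m - p)%:R = m%:R - p%:R :> R.
Proof. by move=> h; rewrite natrB. Qed.

Lemma sum_const_nat_R (a : R) p q : (p <= q)%N -> \sum_(p <= i < q) a = (q%:R - p%:R) * a.
Proof. by move=> h; rewrite sumr_const_nat -[a *+ _]mulr_natr natrB // mulrC. Qed.


Lemma ptw (L U v : R) : L <= U -> L - pp (L - v) + pp (v - U) <= v.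
Proof. move=> h; rewrite /pp; case: ifP => h1; case: ifP => h2; lra. Qed.

Lemma topstep m x L U :
  (forall y, mono m y -> HallB m y L -> HallT m y U -> repr m y L U) ->
  mono m.+1 x -> HallB m.+1 x L -> HallT m.+1 x U ->
  \sum_(0 <= i < m.+1) pp (L - x i) <= \sum_(0 <= i < m.+1) pp (x i - U) ->
  repr m.+1 x L U.
Proof.
move=> IH hm hB hT hNP.
have hLU : L <= U.
  have h1 := hB m.+1 (leqnn _); have h2 := hT 0%N (leq0n _).
  rewrite /gg subrr mulr0 subr0 in h1; rewrite /gg mulr0 mul0r addr0 subr0 in h2.
  have : m.+1%:R * L <= m.+1%:R * U by lra.
  by rewrite ler_pM2l // ltr0n.
have xmax : forall i, (i < m.+1)%N -> x i <= x m by move=> i hi; apply: hm; lia.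
case: (ltrP (x m) U) => ht.
  have Pm0 : \sum_(0 <= i < m.+1) pp (x i - U) = 0.
    rewrite big_nat_cond big1 // => i /andP [/andP [_ hi] _].
    rewrite /pp; case: ifP => // h; have := xmax i hi; lra.
  exists (fun _ _ => 0), x; split; first by move=> i j _ _; lra.
  split.
    move=> i hi; have := xmax i hi => hxi.
    have := @sum_ge_term _ (fun i => pp (L - x i)) m.+1 i (fun i => pp_ge0 _) hi.
    have := pp_ge (L - x i) => /=; lra.
  by move=> k hk; rewrite !big1 // subr0 addr0.
set s := x m - U.
have es : s = x m - U by [].
have s0 : 0 <= s by rewrite /s; lra.
have s1 : s <= 3/2 * m%:R.
  have := hT m (leqnSn _); rewrite big_nat1 /gg -addn1 natrD /s; lra.
have hmx : mono m x by move=> i j hij hj; apply: hm => //; apply: ltn_trans hj _.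
have [lam hlam] := water hmx s0 s1.
pose cc := fun j => clamp (lam - x j).
pose y := fun j => x j + cc j.
have hmy : mono m y by move=> i j hij hj; apply: clamp_mono; apply: hmx.
have [q [hqm hq]] : exists q, (q <= m)%N /\ forall j, (j < m)%N -> (x j + 3/2 <= lam) = (j < q)%N.
  apply: (@prefix_cut (fun j => x j + 3/2 <= lam)) => i j hij hj h.
  have := hmx i j hij hj; lra.
have [r [hrm hr]] : exists r, (r <= m)%N /\ forall j, (j < m)%N -> (x j < lam) = (j < r)%N.
  apply: (@prefix_cut (fun j => x j < lam)) => i j hij hj h.
  have := hmx i j hij hj; lra.
have hqr : (q <= r)%N.
  rewrite leqNgt; apply/negP => hrq.
  have hr1 : (r < m)%N by apply: leq_trans hrq hqm.
  have := hq r hr1; rewrite hrq => h1.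
  have := hr r hr1; rewrite ltnn => h2.
  move: h1 h2; lra.
have F1 : forall j, (j < q)%N -> cc j = 3/2.
  move=> j hj; apply: clamp_ge; have hj2 : (j < m)%N by lia.
  have := hq j hj2; rewrite hj; lra.
have F2 : forall j, (q <= j)%N -> (j < r)%N -> y j = lam.
  move=> j hj1 hj2; have hj3 : (j < m)%N by lia.
  have := hq j hj3; have := hr j hj3; rewrite hj2 ltnNge hj1 /= => h1 h2.
  rewrite /y /cc clamp_id; lra.
have F3 : forall j, (r <= j)%N -> (j < m)%N -> cc j = 0.
  move=> j hj1 hj2; apply: clamp_le0.
  have := hr j hj2; rewrite ltnNge hj1 /= => h; lra.
have Ysplit : forall p, \sum_(0 <= i < p) y i = \sum_(0 <= i < p) x i + \sum_(0 <= i < p) cc i.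
  by move=> p; rewrite big_split.
have Cq : forall p, (p <= q)%N -> \sum_(0 <= i < p) cc i = 3/2 * p%:R.
  move=> p hp; rewrite (eq_big_nat _ _ (F2 := fun _ => 3/2)); last first.
    by move=> i /andP [_ hi]; apply: F1; lia.
  by rewrite sum_const_nat_R // subr0 mulrC.
have Cm : \sum_(0 <= i < m) cc i = s by [].
have Cr : forall p, (r <= p)%N -> (p <= m)%N -> \sum_(0 <= i < p) cc i = s.
  move=> p hp1 hp2.
  have z : \sum_(p <= i < m) cc i = 0.
    rewrite big_nat_cond big1 // => i /andP [/andP [h1 h2] _].
    by apply: F3 => //; lia.
  by rewrite -Cm (big_cat_nat (leq0n p) hp2) /= z addr0.
have Ymid : forall p, (q <= p)%N -> (p <= r)%N ->
    \sum_(0 <= i < p) y i = \sum_(0 <= i < q) y i + (p%:R - q%:R) * lam.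
  move=> p hp1 hp2; rewrite (big_cat_nat (leq0n q) hp1) /=; congr (_ + _).
  rewrite (eq_big_nat _ _ (F2 := fun _ => lam)); first by rewrite sum_const_nat_R.
  by move=> i /andP [h1 h2]; apply: F2 => //; lia.
have Xn : \sum_(0 <= i < m.+1) x i = \sum_(0 <= i < m) x i + x m by rewrite big_nat_recr.
have Ym : \sum_(0 <= i < m) y i = \sum_(0 <= i < m) x i + s by rewrite Ysplit Cm.
have RB1 : forall p, (p <= q)%N -> p%:R * L - gg m p <= \sum_(0 <= i < p) y i.
  move=> p hp; rewrite Ysplit Cq //.
  have hp2 : (p <= m.+1)%N by lia.
  have := hB p hp2; rewrite gg_S; lra.
have RB2 : forall p, (r <= p)%N -> (p <= m)%N -> p%:R * L - gg m p <= \sum_(0 <= i < p) y i.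
  move=> p hp1 hp2; rewrite Ysplit (Cr p hp1 hp2).
  have hp3 : (p <= m.+1)%N by lia.
  case: (lerP (3/2 * p%:R) s) => hs.
    have := hB p hp3; rewrite gg_S; lra.
  have h1 : \sum_(0 <= i < p) (L - pp (L - x i) + pp (x i - U)) <= \sum_(0 <= i < p) x i.
    by apply: ler_sum => i _; apply: ptw.
  rewrite big_split /= sumrB sum_const_nat_R // subr0 in h1.
  have h2 : \sum_(0 <= i < p) pp (L - x i) <= \sum_(0 <= i < m.+1) pp (L - x i).
    exact: (sum_le_sub (fun i => pp_ge0 _) hp3).
  have h3 : \sum_(0 <= i < m.+1) pp (x i - U) =
      \sum_(0 <= i < p) pp (x i - U) + \sum_(p <= i < m) pp (x i - U) + s.
    rewrite big_nat_recr //= (big_cat_nat (leq0n p) hp2) /=.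
    by rewrite /pp (_ : (0 <= x m - U) = true) //; apply/idP; lra.
  have h4 : \sum_(p <= i < m) pp (x i - U) <= (m%:R - p%:R) * s.
    rewrite -sum_const_nat_R //; apply: ler_sum_nat => i /andP [_ hi].
    have := xmax i (ltn_trans hi (ltnSn _)); rewrite /pp; case: ifP => _; lra.
  have h5 : (m%:R - p%:R) * s <= (m%:R - p%:R) * (3/2 * p%:R).
    apply: ler_wpM2l; last exact: ltW.
    by rewrite subr_ge0 ler_nat.
  rewrite /gg; lra.
have HB : HallB m y L.
  move=> p hp.
  case: (leqP p q) => hpq; first exact: RB1.
  case: (leqP r p) => hrp; first exact: RB2.
  have hq' := RB1 q (leqnn q); have hr' := RB2 r (leqnn r) hrm.
  rewrite (Ymid p (ltnW hpq) (ltnW hrp)).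
  rewrite (Ymid r hqr (leqnn r)) in hr'.
  have H : 0 + (L - 3/2 * m%:R) * p%:R + 3/2 * p%:R ^+ 2 <=
           \sum_(0 <= i < q) y i + (p%:R - q%:R) * lam.
    apply: (interp (Rr := r%:R)).
    - by rewrite ler_nat ltnW.
    - by rewrite ler_nat ltnW.
    - rewrite /gg expr2 in hq' *; lra.
    - rewrite /gg expr2 in hr' *; lra.
  rewrite /gg expr2 in H *; lra.
have RT1 : forall p, (p <= q)%N ->
    \sum_(0 <= i < m) y i - (m%:R - p%:R) * U - gg m p <= \sum_(0 <= i < p) y i.
  move=> p hp; rewrite Ym Ysplit Cq //.
  have hp2 : (p <= m.+1)%N by lia.
  have := hT p hp2; rewrite sum_split // Xn gg_S natS1; lra.
have RT2 : forall p, (r <= p)%N -> (p <= m)%N ->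
    \sum_(0 <= i < m) y i - (m%:R - p%:R) * U - gg m p <= \sum_(0 <= i < p) y i.
  move=> p hp1 hp2; rewrite Ym Ysplit (Cr p hp1 hp2).
  have hp3 : (p <= m.+1)%N by lia.
  case: (lerP (U + 3/2 * p%:R) (x m)) => hs.
    have := hT p hp3; rewrite sum_split // Xn gg_S natS1; lra.
  have h1 : \sum_(p <= i < m) x i <= (m%:R - p%:R) * x m.
    rewrite -sum_const_nat_R //; apply: ler_sum_nat => i /andP [_ hi].
    exact: xmax (ltn_trans hi (ltnSn _)).
  have h2 : (m%:R - p%:R) * x m <= (m%:R - p%:R) * (U + 3/2 * p%:R).
    apply: ler_wpM2l; last exact: ltW.
    by rewrite subr_ge0 ler_nat.
  move: h1; rewrite sum_split // /gg; lra.
have HT : HallT m y U.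
  move=> p hp; rewrite sum_split //.
  suff : \sum_(0 <= i < m) y i - (m%:R - p%:R) * U - gg m p <= \sum_(0 <= i < p) y i by lra.
  case: (leqP p q) => hpq; first exact: RT1.
  case: (leqP r p) => hrp; first exact: RT2.
  have hq' := RT1 q (leqnn q); have hr' := RT2 r (leqnn r) hrm.
  rewrite (Ymid p (ltnW hpq) (ltnW hrp)).
  rewrite (Ymid r hqr (leqnn r)) in hr'.
  have H : (\sum_(0 <= i < m) y i - m%:R * U) + (U - 3/2 * m%:R) * p%:R + 3/2 * p%:R ^+ 2 <=
           \sum_(0 <= i < q) y i + (p%:R - q%:R) * lam.
    apply: (interp (Rr := r%:R)).
    - by rewrite ler_nat ltnW.
    - by rewrite ler_nat ltnW.
    - rewrite /gg expr2 in hq' *; lra.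
    - rewrite /gg expr2 in hr' *; lra.
  rewrite /gg expr2 in H *; lra.
have [c [c1 [hc [hc1 heq]]]] := IH y hmy HB HT.
exists (fun i j => if i == m then cc j else c i j), (fun i => if i == m then U else c1 i).
split.
  move=> i j hji hi; case: eqP => him; first exact: clamp_range.
  by apply: hc => //; lia.
split.
  move=> i hi; case: eqP => him; first lra.
  by apply: hc1; lia.
move=> k hk.
case: (eqVneq k m) => [-> | hkm].
  rewrite (big_geq (m := m.+1) (n := m.+1)) // subr0 Cm es; ring.
have hk2 : (k < m)%N by lia.
rewrite big_nat_recr /=; last by lia.
rewrite eqxx.
rewrite (eq_big_nat _ _ (F1 := fun i => if i == m then cc k else c i k) (F2 := fun i => c i k)); last first.
  by move=> i /andP [_ hi]; rewrite ifN //; rewrite neq_ltn hi.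
have := heq k hk2; rewrite /y => h; lra.
Qed.

End Top.

Section Closed.
Variable R : realFieldType.
Implicit Types x y : nat -> R.

Lemma sum_rev (F : nat -> R) m p : (p <= m.+1)%N ->
  \sum_(0 <= i < p) F (m - i)%N = \sum_(m.+1 - p <= j < m.+1) F j.
Proof.
elim: p => [|p IH] hp; first by rewrite subn0 !big_geq.
rewrite big_nat_recr //= IH; last by lia.
have -> : (m.+1 - p.+1 = m - p)%N by lia.
rewrite (big_ltn (m := (m - p)%N)); last by lia.
have -> : ((m - p).+1 = m.+1 - p)%N by lia.
by rewrite addrC.
Qed.

Lemma gg_sym n p : (p <= n)%N -> gg n (n - p) = gg n p :> R.
Proof. by move=> h; rewrite /gg natrB //; ring. Qed.

Lemma mirror_back m x L U :
  repr m.+1 (fun i => - x (m - i)%N) (- U) (- L) -> repr m.+1 x L U.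
Proof.
move=> [c [c1 [hc [hc1 heq]]]].
exists (fun i j => c (m - j)%N (m - i)%N), (fun i => - c1 (m - i)%N).
split; first by move=> i j hji hi; apply: hc; lia.
split; first by move=> i hi; have := hc1 (m - i)%N ltac:(lia); lra.
move=> k hk.
have := heq (m - k)%N ltac:(lia).
have -> : (m - (m - k) = k)%N by lia.
have S1 : \sum_(0 <= j < m - k) c (m - k)%N j = \sum_(k.+1 <= i < m.+1) c (m - k)%N (m - i)%N.
  have -> : (k.+1 = m.+1 - (m - k))%N by lia.
  rewrite -(@sum_rev (fun i => c (m - k)%N (m - i)%N) m (m - k)); last by lia.
  apply: eq_big_nat => i /andP [_ hi] /=; congr (c _ _); lia.
have S2 : \sum_((m - k).+1 <= i < m.+1) c i (m - k)%N = \sum_(0 <= j < k) c (m - j)%N (m - k)%N.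
  have -> : ((m - k).+1 = m.+1 - k)%N by lia.
  by rewrite (@sum_rev (fun j => c j (m - k)%N) m k); last by lia.
rewrite S1 S2 => h; lra.
Qed.

Lemma mirror_hyps m x L U :
  mono m.+1 x -> HallB m.+1 x L -> HallT m.+1 x U ->
  [/\ mono m.+1 (fun i => - x (m - i)%N), HallB m.+1 (fun i => - x (m - i)%N) (- U)
    & HallT m.+1 (fun i => - x (m - i)%N) (- L)].
Proof.
move=> hm hB hT; split.
- move=> i j hij hj /=; rewrite lerN2; apply: hm; lia.
- move=> p hp.
  rewrite (eq_big_nat _ _ (F2 := fun i => - x (m - i)%N)) // sumrN.
  rewrite (@sum_rev x m p hp).
  have := hT (m.+1 - p)%N (leq_subr _ _).
  rewrite gg_sym // natrB //; lra.
- move=> p hp.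
  rewrite sum_split // !sumrN (@sum_rev x m p hp) (@sum_rev x m m.+1 (leqnn _)) subnn.
  rewrite (@sum_split _ x (m.+1 - p)%N m.+1 (leq_subr _ _)).
  have := hB (m.+1 - p)%N (leq_subr _ _).
  rewrite gg_sym // natrB //; lra.
Qed.

Lemma closedH n : forall x L U, mono n x -> HallB n x L -> HallT n x U -> repr n x L U.
Proof.
elim: n => [|m IH] x L U hm hB hT.
  by exists (fun _ _ => 0), (fun _ => 0); split.
case: (lerP (\sum_(0 <= i < m.+1) pp (L - x i)) (\sum_(0 <= i < m.+1) pp (x i - U))) => hNP.
  exact: (topstep (fun y => IH y L U) hm hB hT hNP).
apply: mirror_back.
have [hm' hB' hT'] := mirror_hyps hm hB hT.
apply: (topstep (fun y => IH y (- U) (- L)) hm' hB' hT').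
have -> : \sum_(0 <= i < m.+1) pp (- x (m - i)%N - - L) = \sum_(0 <= i < m.+1) pp (L - x (m - i)%N).
  by apply: eq_bigr => i _; congr pp; ring.
have -> : \sum_(0 <= i < m.+1) pp (- U - - x (m - i)%N) = \sum_(0 <= i < m.+1) pp (x (m - i)%N - U).
  by apply: eq_bigr => i _; congr pp; ring.
rewrite (@sum_rev (fun i => pp (L - x i)) m m.+1 (leqnn _)) (@sum_rev (fun i => pp (x i - U)) m m.+1 (leqnn _)).
rewrite subnn; exact: ltW.
Qed.

End Closed.

Section Strict.
Variable R : realFieldType.
Implicit Types x y : nat -> R.

Lemma eps_exists n (a : nat -> R) : (forall p, (0 < p)%N -> (p <= n)%N -> 0 < a p) ->
  exists e : R, 0 < e /\ forall p, (0 < p)%N -> (p <= n)%N -> e * p%:R <= a p.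
Proof.
elim: n => [|n IH] ha.
  by exists 1; split => // p h1 h2; lia.
have [e [e0 he]] : exists e : R, 0 < e /\ forall p, (0 < p)%N -> (p <= n)%N -> e * p%:R <= a p.
  by apply: IH => p h1 h2; apply: ha => //; lia.
have an : 0 < a n.+1 by apply: ha.
have n0 : 0 < n.+1%:R :> R by rewrite ltr0n.
case: (lerP (e * n.+1%:R) (a n.+1)) => h.
  exists e; split => // p h1 h2.
  case: (eqVneq p n.+1) => [-> //|hp]; apply: he => //; lia.
exists (a n.+1 / n.+1%:R); split; first by rewrite divr_gt0.
have hl : a n.+1 / n.+1%:R < e by rewrite ltr_pdivrMr.
move=> p h1 h2.
case: (eqVneq p n.+1) => [->|hp]; first by rewrite divfK // gt_eqF.
have hp2 : (p <= n)%N by lia.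
apply: le_trans (he p h1 hp2).
by rewrite ler_wpM2r // ?ler0n // ltW.
Qed.

Definition reprS n x (L U : R) := exists (c : nat -> nat -> R) (c1 : nat -> R),
  (forall i j, (j < i)%N -> (i < n)%N -> 0 <= c i j <= 3/2) /\
  (forall i, (i < n)%N -> L < c1 i <= U) /\
  forall k, (k < n)%N -> x k = c1 k + \sum_(0 <= j < k) c k j - \sum_(k.+1 <= i < n) c i k.

Lemma strictH n x L U : mono n x ->
  (forall p, (0 < p)%N -> (p <= n)%N -> p%:R * L - gg n p < \sum_(0 <= i < p) x i) ->
  HallT n x U -> reprS n x L U.
Proof.
move=> hm hB hT.
have [e [e0 he]] := @eps_exists n (fun p => \sum_(0 <= i < p) x i - (p%:R * L - gg n p))
  (fun p h1 h2 => ltac:(have := hB p h1 h2; lra)).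
have hB' : HallB n x (L + e).
  move=> p hp; case: (posnP p) => [->|hp0].
    rewrite big_geq // /gg; lra.
  have := he p hp0 hp; lra.
have [c [c1 [hc [hc1 heq]]]] := closedH hm hB' hT.
exists c, c1; split => //; split => // i hi.
have := hc1 i hi; lra.
Qed.

End Strict.

Section Phi.
Variable R : realFieldType.
Variable d : nat.

Definition phi (w : 'I_d -> R) (v : 'rV[R]_d) : R := \sum_(k < d) w k * v 0 k.

Lemma phiD w u v : phi w (u + v) = phi w u + phi w v.
Proof. by rewrite /phi -big_split; apply: eq_bigr => k _; rewrite mxE mulrDr. Qed.

Lemma phiN w v : phi w (- v) = - phi w v.
Proof. by rewrite /phi -sumrN; apply: eq_bigr => k _; rewrite mxE mulrN. Qed.

Lemma phiB w u v : phi w (u - v) = phi w u - phi w v.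
Proof. by rewrite phiD phiN. Qed.

Lemma phiZ w a v : phi w (a *: v) = a * phi w v.
Proof. by rewrite /phi mulr_sumr; apply: eq_bigr => k _; rewrite mxE mulrCA. Qed.

Lemma phi_sum w (I : finType) (P : pred I) (F : I -> 'rV[R]_d) :
  phi w (\sum_(i | P i) F i) = \sum_(i | P i) phi w (F i).
Proof.
rewrite /phi (exchange_big) /=; apply: eq_bigr => k _.
by rewrite summxE mulr_sumr.
Qed.

Lemma phi_beta w i : phi w (beta R i) = w i.
Proof.
rewrite /phi (bigD1 i) //= big1 ?addr0.
  by rewrite /beta mxE !eqxx mulr1.
by move=> k hk; rewrite /beta mxE eqxx /= (negbTE hk) mulr0.
Qed.

Definition ind (b : bool) : R := if b then 1 else 0.

Lemma phi_pred1 (v : 'rV[R]_d) k : phi (fun i => ind (i == k)) v = v 0 k.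
Proof.
rewrite /phi (bigD1 k) //= big1 ?addr0.
  by rewrite /ind eqxx mul1r.
by move=> i hi; rewrite /ind (negbTE hi) mul0r.
Qed.

Lemma phi_dsum w (P : pred 'I_d) (Q : 'I_d -> pred 'I_d) (c : 'I_d -> 'I_d -> R) :
  phi w (\sum_(i | P i) \sum_(j | Q i j) c i j *: (beta R i - beta R j)) =
  \sum_i \sum_j (if P i && Q i j then c i j * (w i - w j) else 0).
Proof.
rewrite phi_sum big_mkcond; apply: eq_bigr => i _.
case: (P i) => /=; last by rewrite big1.
rewrite phi_sum big_mkcond; apply: eq_bigr => j _.
by case: (Q i j) => //; rewrite phiZ phiB !phi_beta.
Qed.

Lemma phi_ssum w (P : pred 'I_d) (c : 'I_d -> R) :
  phi w (\sum_(i | P i) c i *: beta R i) = \sum_(i | P i) c i * w i.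
Proof. by rewrite phi_sum; apply: eq_bigr => i _; rewrite phiZ phi_beta. Qed.

Lemma dsum_ind_l (G : 'I_d -> 'I_d -> R) k :
  \sum_i \sum_j G i j * ind (i == k) = \sum_j G k j.
Proof.
rewrite (bigD1 k) //=.
have -> : \sum_(i | i != k) \sum_j G i j * ind (i == k) = 0.
  by apply: big1 => i hi; apply: big1 => j _; rewrite /ind (negbTE hi) mulr0.
by rewrite addr0; apply: eq_bigr => j _; rewrite /ind eqxx mulr1.
Qed.

Lemma dsum_ind_r (G : 'I_d -> 'I_d -> R) k :
  \sum_i \sum_j G i j * ind (j == k) = \sum_i G i k.
Proof.
apply: eq_bigr => i _.
rewrite (bigD1 k) //=.
have -> : \sum_(j | j != k) G i j * ind (j == k) = 0.
  by apply: big1 => j hj; rewrite /ind (negbTE hj) mulr0.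
by rewrite addr0 /ind eqxx mulr1.
Qed.

Lemma ord_interval (F : nat -> R) (lo hi : nat) : (hi <= d)%N ->
  \sum_(i < d | ((lo <= i) && (i < hi))%N) F i = \sum_(lo <= i < hi) F i.
Proof.
move=> h.
case: (leqP lo hi) => hlh; last first.
  rewrite big_geq; last by lia.
  by rewrite big1 // => i /andP [h1 h2]; lia.
rewrite (big_nat_widenl _ _ _ _ _ (leq0n lo)) (big_nat_widen _ _ _ _ _ h) big_mkord.
by apply: eq_bigl => i /=.
Qed.

Lemma ord_interval_if (F : nat -> R) (lo hi : nat) : (hi <= d)%N ->
  \sum_(i < d) (if ((lo <= i) && (i < hi))%N then F i else 0) = \sum_(lo <= i < hi) F i.
Proof. by move=> h; rewrite -big_mkcond ord_interval. Qed.

Lemma sum_ind_interval (lo hi : nat) : (lo <= hi)%N -> (hi <= d)%N ->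
  \sum_(i < d) ind (((lo <= i) && (i < hi))%N) = hi%:R - lo%:R.
Proof.
move=> h1 h2.
rewrite (eq_bigr (fun i : 'I_d => if ((lo <= i) && (i < hi))%N then 1 else 0)) //.
by rewrite (ord_interval_if (fun _ => 1)) // sumr_const_nat -mulr_natr mul1r natrB.
Qed.

Lemma dsum_prod (A B : 'I_d -> bool) (k : R) :
  \sum_i \sum_j k * ind (A i) * ind (B j) = k * (\sum_i ind (A i)) * (\sum_j ind (B j)).
Proof.
rewrite (eq_bigr (fun i => (k * ind (A i)) * \sum_j ind (B j))); last by move=> i _; rewrite mulr_sumr.
by rewrite -mulr_suml -mulr_sumr.
Qed.

End Phi.
Arguments ind {R} b.

Lemma last_argmin (R : realFieldType) (f : nat -> R) n :
  exists e, (e <= n)%N /\ (forall k, (k <= n)%N -> f e <= f k) /\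
    (forall k, (e < k)%N -> (k <= n)%N -> f e < f k).
Proof.
elim: n => [|n [e [he [h1 h2]]]].
  exists 0%N; split => //; split => [k|k hk1 hk2]; [ | lia].
  by rewrite leqn0 => /eqP ->.
case: (lerP (f n.+1) (f e)) => h.
  exists n.+1; split => //; split => [k hk|k hk1 hk2]; last lia.
  case: (eqVneq k n.+1) => [-> //|hkn].
  by apply: le_trans h (h1 k _); lia.
exists e; split; first lia; split => [k hk|k hk1 hk2].
  case: (eqVneq k n.+1) => [->|hkn]; first exact: ltW.
  by apply: h1; lia.
case: (eqVneq k n.+1) => [-> //|hkn].
by apply: h2; lia.
Qed.

Section Main.
Variables (R : realFieldType) (a d : nat) (chi : 'rV[R]_d).

Definition bn (k : nat) : R := \sum_(i < d | (i : nat) == k) chi 0 i.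

Lemma bnE (i : 'I_d) : bn i = chi 0 i.
Proof. by rewrite /bn (big_pred1 i) // => j /=. Qed.

Lemma mono_bn : strictly_dominant chi -> forall i j, (i <= j)%N -> (j < d)%N -> bn i <= bn j.
Proof.
move=> hsd i j hij hj.
have hi : (i < d)%N by lia.
rewrite -[i]/(nat_of_ord (Ordinal hi)) -[j]/(nat_of_ord (Ordinal hj)) !bnE.
case: (eqVneq i j) => [eij|nij].
  by have -> : Ordinal hi = Ordinal hj by apply: val_inj.
by apply: ltW; apply: hsd => /=; lia.
Qed.

Lemma phi_int (lo hi : nat) : (hi <= d)%N ->
  phi (fun k : 'I_d => ind (((lo <= k) && (k < hi))%N)) chi = \sum_(lo <= k < hi) bn k.
Proof.
move=> h; rewrite /phi -(@ord_interval_if R d bn lo hi h); apply: eq_bigr => k _.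
by rewrite /ind bnE; case: ifP => _; rewrite ?mul1r ?mul0r.
Qed.


Definition AA : R := a%:R / 2.
Lemma AA_ge0 : 0 <= AA.
Proof. by rewrite /AA divr_ge0 // ler0n. Qed.

Lemma va_phi : in_Va1 a chi -> exists (t : 'I_d -> 'I_d -> R) (s u : 'I_d -> R),
  (forall i j, 0 <= t i j <= 1) /\ (forall k, -1 <= s k <= 1) /\ (forall k, 0 <= u k <= 1) /\
  forall w, phi w chi = \sum_i \sum_j (3/2 * t i j) * (w i - w j) + \sum_k (AA * s k - u k) * w k.
Proof.
move=> [t [s [u [ht [hs [hu ->]]]]]].
exists t, s, u; split => //; split => //; split => // w.
rewrite !phiD phi_dsum phi_ssum phi_sum.
rewrite -addrA; congr (_ + _).
rewrite -big_split; apply: eq_bigr => k _ /=.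
rewrite phiZ phiN phi_beta /AA; ring.
Qed.

Lemma hallN1 : in_Va1 a chi -> forall p, (p <= d)%N ->
  \sum_(p <= k < d) bn k <= (d%:R - p%:R) * AA + 3/2 * (d%:R - p%:R) * p%:R.
Proof.
move=> hv p hp.
have [t [s [u [ht [hs [hu hphi]]]]]] := va_phi hv.
rewrite -(phi_int p (leqnn d)) hphi.
have h1 : \sum_i \sum_j (3/2 * t i j) * (ind (((p <= i) && (i < d))%N) - ind (((p <= j) && (j < d))%N))
   <= \sum_(i < d) \sum_(j < d) 3/2 * ind (((p <= i) && (i < d))%N) * ind (((0 <= j) && (j < p))%N).
  apply: ler_sum => i _; apply: ler_sum => j _.
  have := ht i j; have := ltn_ord i; have := ltn_ord j; rewrite /ind; case: ifPn => h1; case: ifPn => h2; case: ifPn => h3 //; lra || lia.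
rewrite dsum_prod !sum_ind_interval // in h1.
have h2 : \sum_k (AA * s k - u k) * ind (((p <= k) && (k < d))%N) <=
          \sum_(k < d) AA * ind (((p <= k) && (k < d))%N).
  apply: ler_sum => k _; have := hs k; have := hu k; have := AA_ge0.
  rewrite /ind; case: ifP => _; nra.
rewrite -mulr_sumr sum_ind_interval // in h2.
lra.
Qed.

Lemma hallN2 : in_Va1 a chi -> forall p, (p <= d)%N ->
  - (p%:R * (AA + 1)) - 3/2 * (d%:R - p%:R) * p%:R <= \sum_(0 <= k < p) bn k.
Proof.
move=> hv p hp.
have [t [s [u [ht [hs [hu hphi]]]]]] := va_phi hv.
rewrite -(phi_int 0 hp) hphi.
have h1 : \sum_(i < d) \sum_(j < d) (- (3/2)) * ind (((p <= i) && (i < d))%N) * ind (((0 <= j) && (j < p))%N)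
   <= \sum_i \sum_j (3/2 * t i j) * (ind (((0 <= i) && (i < p))%N) - ind (((0 <= j) && (j < p))%N)).
  apply: ler_sum => i _; apply: ler_sum => j _.
  have := ht i j; have := ltn_ord i; have := ltn_ord j; rewrite /ind; case: ifPn => h1; case: ifPn => h2; case: ifPn => h3 //; lra || lia.
rewrite dsum_prod !sum_ind_interval // in h1.
have h2 : \sum_(k < d) (- (AA + 1)) * ind (((0 <= k) && (k < p))%N) <=
          \sum_k (AA * s k - u k) * ind (((0 <= k) && (k < p))%N).
  apply: ler_sum => k _; have := hs k; have := hu k; have := AA_ge0.
  rewrite /ind; case: ifP => _; nra.
rewrite -mulr_sumr sum_ind_interval // in h2.
lra.
Qed.

End Main.

Section Rhs.
Variables (R : realFieldType) (d : nat).

Definition rhs (e : nat) (c : 'I_d -> 'I_d -> R) (c1 : 'I_d -> R) : 'rV[R]_d :=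
  \sum_(i < d | (i < e)%N) \sum_(j < d | (j < i)%N)
              c i j *: (beta R i - beta R j)
          + \sum_(i < d | (e <= i)%N) \sum_(j < d | (e <= j)%N && (j < i)%N)
              c i j *: (beta R i - beta R j)
          + \sum_(i < d | (e <= i)%N) \sum_(j < d | (j < e)%N)
              (3 / 2) *: (beta R i - beta R j)
          + \sum_(i < d) c1 i *: beta R i.

Definition Gd (e : nat) (c : 'I_d -> 'I_d -> R) (i j : 'I_d) : R :=
  (if (i < e)%N && (j < i)%N then c i j else 0) +
  (if (e <= i)%N && ((e <= j)%N && (j < i)%N) then c i j else 0) +
  (if (e <= i)%N && (j < e)%N then 3/2 else 0).

Lemma rhs_phi e c c1 w :
  phi w (rhs e c c1) = \sum_i \sum_j Gd e c i j * (w i - w j) + \sum_i c1 i * w i.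
Proof.
rewrite /rhs !phiD !phi_dsum phi_ssum; congr (_ + _).
rewrite -!big_split; apply: eq_bigr => i _; rewrite -!big_split; apply: eq_bigr => j _ /=.
rewrite /Gd; case: ifP => _; case: ifP => _; case: ifP => _; ring.
Qed.

Lemma dsum_splitw (G : 'I_d -> 'I_d -> R) (w : 'I_d -> R) :
  \sum_i \sum_j G i j * (w i - w j) = \sum_i \sum_j G i j * w i - \sum_i \sum_j G i j * w j.
Proof.
rewrite -sumrB; apply: eq_bigr => i _; rewrite -sumrB; apply: eq_bigr => j _; ring.
Qed.

Lemma rhs_coord e c c1 k :
  rhs e c c1 0 k = \sum_j Gd e c k j - \sum_i Gd e c i k + c1 k.
Proof.
rewrite -phi_pred1 rhs_phi dsum_splitw dsum_ind_l dsum_ind_r; congr (_ + _).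
rewrite (bigD1 k) //= big1 ?addr0; first by rewrite /ind eqxx mulr1.
by move=> i hi; rewrite /ind (negbTE hi) mulr0.
Qed.

End Rhs.

Lemma shift_sum (R : realFieldType) (F : nat -> R) (e lo hi : nat) :
  \sum_(lo <= i < hi) F (e + i)%N = \sum_(e + lo <= i < e + hi) F i.
Proof.
rewrite (addnC e lo) (big_addn lo (e + hi) e xpredT F) addKn.
by apply: eq_bigr => i _; rewrite addnC.
Qed.

Lemma sum_addc (R : realFieldType) (F : nat -> R) (c : R) (lo hi : nat) : (lo <= hi)%N ->
  \sum_(lo <= i < hi) (F i + c) = \sum_(lo <= i < hi) F i + (hi%:R - lo%:R) * c.
Proof. by move=> h; rewrite big_split /= sum_const_nat_R. Qed.

Section Exist.
Variables (R : realFieldType) (a d : nat) (chi : 'rV[R]_d).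

Definition Phi (k : nat) : R :=
  \sum_(0 <= i < k) bn chi i + k%:R * AA R a + 3/2 * k%:R * (d%:R - k%:R).

Lemma block1 e : strictly_dominant chi -> in_Va1 a chi -> (e <= d)%N ->
  (forall k, (k <= e)%N -> Phi e <= Phi k) ->
  repr e (fun i => bn chi i + 3/2 * (d%:R - e%:R)) (- (AA R a + 1)) (- AA R a).
Proof.
move=> hsd hv hed hmin; apply: closedH.
- move=> i j hij hj; have := mono_bn hsd hij (leq_trans hj hed); lra.
- move=> p hp; rewrite sum_addc // subr0.
  have := hallN2 hv (leq_trans hp hed); rewrite /gg; lra.
- move=> p hp; rewrite sum_addc // sum_split //.
  have := hmin p hp; rewrite /Phi /gg; lra.
Qed.

Lemma block2 e : strictly_dominant chi -> in_Va1 a chi -> (e <= d)%N ->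
  (forall k, (e < k)%N -> (k <= d)%N -> Phi e < Phi k) ->
  reprS (d - e) (fun i => bn chi (e + i) - 3/2 * e%:R) (- AA R a) (AA R a).
Proof.
move=> hsd hv hed hmin; apply: strictH.
- move=> i j hij hj; have := @mono_bn R d chi hsd (e + i) (e + j); lra || (move=> h; have := h ltac:(lia) ltac:(lia); lra).
- move=> p hp0 hp; rewrite (sum_addc (fun i => bn chi (e + i))) // subr0 shift_sum addn0.
  rewrite (@sum_split _ (bn chi) e (e + p)%N); last by lia.
  have := hmin (e + p)%N ltac:(lia) ltac:(lia).
  rewrite /Phi /gg natrD natrB //; lra.
- move=> p hp; rewrite (sum_addc (fun i => bn chi (e + i))) // shift_sum.
  have -> : (e + (d - e) = d)%N by lia.
  have := hallN1 hv (p := (e + p)%N) ltac:(lia).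
  rewrite /gg natrD natrB //; lra.
Qed.

End Exist.

Section Exist2.
Variables (R : realFieldType) (a d : nat) (chi : 'rV[R]_d).

Ltac tidy := repeat (case: ifPn => ?); (try by lia); try ring.

Lemma exist_decomp e : strictly_dominant chi -> in_Va1 a chi -> (e <= d)%N ->
  (forall k, (k <= d)%N -> Phi a chi e <= Phi a chi k) ->
  (forall k, (e < k)%N -> (k <= d)%N -> Phi a chi e < Phi a chi k) ->
  decomp a chi e.
Proof.
move=> hsd hv hed hmin1 hmin2.
have [c1f [c1b [hc1 [hcb1 heq1]]]] := block1 hsd hv hed (fun k hk => hmin1 k (leq_trans hk hed)).
have [c2f [c2b [hc2 [hcb2 heq2]]]] := block2 hsd hv hed hmin2.
pose cf (i j : nat) := if (i < e)%N then c1f i j else if (e <= j)%N then c2f (i - e)%N (j - e)%N else 0.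
pose c (i j : 'I_d) := cf i j.
pose c1 (i : 'I_d) := if (i < e)%N then c1b i else c2b (i - e)%N.
exists c, c1.
split.
  move=> i j hji; rewrite /c /cf; have hid := ltn_ord i; case: ifPn => h1.
    by apply: hc1 => //; lia.
  case: ifPn => h2; last lra.
  by apply: hc2; lia.
split.
  move=> i hi; rewrite /c1 hi; have := hcb1 i hi; rewrite /AA; lra.
split.
  move=> i hi; rewrite /c1 ltnNge hi /=; have := ltn_ord i => hid.
  have := hcb2 (i - e)%N ltac:(lia); rewrite /AA; lra.
change (chi = rhs e c c1).
apply/rowP => k; rewrite rhs_coord -bnE.
have hk := ltn_ord k.
case: (ltnP k e) => hke.
  have S1 : \sum_j Gd e c k j = \sum_(0 <= j < k) c1f k j.
    rewrite -(@ord_interval_if R d (c1f k) 0 k) ?(ltnW hk) //.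
    apply: eq_bigr => j _; rewrite /Gd /c /cf; have ? := ltn_ord j; tidy.
  have S2 : \sum_i Gd e c i k = \sum_(k.+1 <= i < e) c1f i k + \sum_(e <= i < d) 3/2.
    rewrite -(@ord_interval_if R d (fun i => c1f i k) k.+1 e) //.
    rewrite -(@ord_interval_if R d (fun _ => 3/2) e d) // -big_split /=.
    apply: eq_bigr => i _; rewrite /Gd /c /cf; have ? := ltn_ord i; tidy.
  rewrite S1 S2 /c1 hke sum_const_nat_R //.
  have := heq1 k hke; lra.
have hk' : (k - e < d - e)%N by lia.
have S1 : \sum_j Gd e c k j = \sum_(0 <= j < k - e) c2f (k - e)%N j + \sum_(0 <= j < e) 3/2.
  have -> : \sum_(0 <= j < k - e) c2f (k - e)%N j =
            \sum_(e <= j < k) c2f (k - e)%N (j - e)%N.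
    have := shift_sum (fun j => c2f (k - e)%N (j - e)%N) e 0 (k - e).
    rewrite addn0 subnKC // => <-.
    by apply: eq_bigr => j _; rewrite addKn.
  rewrite -(@ord_interval_if R d (fun j => c2f (k - e)%N (j - e)%N) e k) ?(ltnW hk) //.
  rewrite -(@ord_interval_if R d (fun _ => 3/2) 0 e) // -big_split /=.
  apply: eq_bigr => j _; rewrite /Gd /c /cf; have ? := ltn_ord j; tidy.
have S2 : \sum_i Gd e c i k = \sum_((k - e).+1 <= i < d - e) c2f i (k - e)%N.
  have -> : \sum_((k - e).+1 <= i < d - e) c2f i (k - e)%N =
            \sum_(k.+1 <= i < d) c2f (i - e)%N (k - e)%N.
    have := shift_sum (fun i => c2f (i - e)%N (k - e)%N) e (k - e).+1 (d - e).
    rewrite addnS !subnKC // => <-.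
    by apply: eq_bigr => j _; rewrite addKn.
  rewrite -(@ord_interval_if R d (fun i => c2f (i - e)%N (k - e)%N) k.+1 d) //.
  apply: eq_bigr => i _; rewrite /Gd /c /cf; have ? := ltn_ord i; tidy.
rewrite S1 S2 /c1 ltnNge hke /= sum_const_nat_R //.
have := heq2 (k - e)%N hk'; rewrite subnKC //; lra.
Qed.

End Exist2.

Section Uniq.
Variables (R : realFieldType) (a d : nat) (chi : 'rV[R]_d).

Ltac crush := repeat (case: ifPn => ?); (try by lia); try lra.

Lemma decomp_lo e k : decomp a chi e -> (k < e)%N -> (e <= d)%N -> Phi a chi e <= Phi a chi k.
Proof.
move=> [c [c1 [hc [hc1 [hc2 heq]]]]] hke hed.
change (chi = rhs e c c1) in heq.
have hphi := phi_int chi k hed.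
rewrite {1}heq rhs_phi in hphi.
have h1 : \sum_(i < d) \sum_(j < d) Gd e c i j * (ind (((k <= i) && (i < e))%N) - ind (((k <= j) && (j < e))%N)) <=
   \sum_(i < d) \sum_(j < d) 3/2 * ind (((k <= i) && (i < e))%N) * ind (((0 <= j) && (j < k))%N) +
   \sum_(i < d) \sum_(j < d) (- (3/2)) * ind (((e <= i) && (i < d))%N) * ind (((k <= j) && (j < e))%N).
  rewrite -big_split; apply: ler_sum => i _; rewrite -big_split; apply: ler_sum => j _ /=.
  have ? := ltn_ord i; have ? := ltn_ord j.
  rewrite /Gd /ind; case: (ltnP j i) => hji; [have := hc i j hji | ]; crush.
rewrite !dsum_prod !sum_ind_interval // in h1; try lia.
have h2 : \sum_(i < d) c1 i * ind (((k <= i) && (i < e))%N) <= \sum_(i < d) (- AA R a) * ind (((k <= i) && (i < e))%N).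
  apply: ler_sum => i _; rewrite /ind; case: ifPn => h; last lra.
  have := hc1 i ltac:(lia); rewrite /AA; lra.
rewrite -mulr_sumr sum_ind_interval // in h2; try lia.
move: hphi; rewrite sum_split; last lia.
rewrite /Phi; lra.
Qed.

Lemma decomp_hi e k : decomp a chi e -> (e < k)%N -> (k <= d)%N -> Phi a chi e < Phi a chi k.
Proof.
move=> [c [c1 [hc [hc1 [hc2 heq]]]]] hek hkd.
change (chi = rhs e c c1) in heq.
have hphi := phi_int chi e hkd.
rewrite {1}heq rhs_phi in hphi.
have h1 :
   \sum_(i < d) \sum_(j < d) (- (3/2)) * ind (((k <= i) && (i < d))%N) * ind (((e <= j) && (j < k))%N) +
   \sum_(i < d) \sum_(j < d) 3/2 * ind (((e <= i) && (i < k))%N) * ind (((0 <= j) && (j < e))%N)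
   <= \sum_(i < d) \sum_(j < d) Gd e c i j * (ind (((e <= i) && (i < k))%N) - ind (((e <= j) && (j < k))%N)).
  rewrite -big_split; apply: ler_sum => i _; rewrite -big_split; apply: ler_sum => j _ /=.
  have ? := ltn_ord i; have ? := ltn_ord j.
  rewrite /Gd /ind; case: (ltnP j i) => hji; [have := hc i j hji | ]; crush.
rewrite !dsum_prod !sum_ind_interval // in h1; try lia.
have hed : (e < d)%N by lia.
have h2 : \sum_(i < d) (- AA R a) * ind (((e <= i) && (i < k))%N) <
          \sum_(i < d) c1 i * ind (((e <= i) && (i < k))%N).
  rewrite -subr_gt0 -sumrB (bigD1 (Ordinal hed)) //=.
  have p1 : 0 < c1 (Ordinal hed) * ind (((e <= e) && (e < k))%N) -
                 - AA R a * ind (((e <= e) && (e < k))%N).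
    rewrite /ind leqnn hek /=; have := hc2 (Ordinal hed) (leqnn e); rewrite /AA; lra.
  have p2 : 0 <= \sum_(i < d | i != Ordinal hed) (c1 i * ind (((e <= i) && (i < k))%N) -
                 - AA R a * ind (((e <= i) && (i < k))%N)).
    apply: sumr_ge0 => i _; rewrite /ind; case: ifPn => h; last lra.
    have := hc2 i ltac:(lia); rewrite /AA; lra.
  lra.
rewrite -mulr_sumr sum_ind_interval // in h2; try lia.
move: hphi; rewrite sum_split; last lia.
rewrite /Phi; lra.
Qed.

End Uniq.

Unset Implicit Arguments.
Theorem proposition3p4 (R : realFieldType) (a d : nat) (chi : 'rV[R]_d) :
  strictly_dominant chi -> in_Va1 a chi ->
  exists! e : nat, (e <= d)%N /\ decomp a chi e.
Proof.
move=> hsd hv.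
have [e [hed [h1 h2]]] := last_argmin (Phi a chi) d.
exists e; split; first by split => //; apply: exist_decomp.
move=> e' [he'd hdec].
case: (ltngtP e e') => hlt //.
  exfalso; have := h2 e' hlt he'd; have := decomp_lo hdec hlt he'd; lra.
exfalso; have := h1 e' he'd; have := decomp_hi hdec hlt hed; lra.
Qed.
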